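(* Let $R$ be a ring with identity and an involution $*$, and let $a\in R$. Then: (i) $a$ is right $(a^*,1)$-invertible if and only if $R=aa^*R$; and $a$ is left $(1,a^* )$-invertible if and only if $R=Ra^*a$; (ii) $a$ is left $(a,a^* )$-invertible if and only if $Ra=Ra^*a^2$; and $a$ is right $(a,a^* )$-invertible if and only if $a^*R=a^*a^2R$; (iii) $a$ is left $(a^*,a)$-invertible if and only if $Ra^*=Ra^2a^*$; and $a$ is right $(a^*,a)$-invertible if and only if $aR=a^2a^*R$.
   Context: An involution is a map $*:R\to R$ with $(x^* )^*=x$, $(xy)^*=y^*x^*$, $(x+y)^*=x^*+y^*$. For $x\in R$: $xR=\{xr:r\in R\}$, $Rx=\{rx:r\in R\}$. For $a,b,c\in R$, $a$ is left $(b,c)$-invertible if there is $y$ with $Ry\subseteq Rc$ and $yab=b$; right $(b,c)$-invertible if there is $y$ with $yR\subseteq bR$ and $cay=c$. *)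

(* Defs.v *)
From HB Require Import structures.
From mathcomp Require Import all_boot all_algebra.
Set Implicit Arguments. Unset Strict Implicit. Unset Printing Implicit Defensive.
Import GRing.Theory.
Local Open Scope ring_scope.

Definition involution (R : pzRingType) (star : R -> R) : Prop :=
  (forall x, star (star x) = x) /\
  (forall x y, star (x * y) = star y * star x) /\
  (forall x y, star (x + y) = star x + star y).

Definition in_rprin (R : pzRingType) (x z : R) : Prop := exists r, z = x * r.
Definition in_lprin (R : pzRingType) (x z : R) : Prop := exists r, z = r * x.

Definition left_bc_invertible (R : pzRingType) (a b c : R) : Prop :=
  exists y : R, (forall z, in_lprin y z -> in_lprin c z) /\ y * a * b = b.

Definition right_bc_invertible (R : pzRingType) (a b c : R) : Prop :=
  exists y : R, (forall z, in_rprin y z -> in_rprin b z) /\ c * a * y = c.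

(* Main.v *)
Require Import Defs.
From mathcomp Require Import all_boot all_algebra.
Local Open Scope ring_scope.
Import GRing.Theory.

Lemma leftE (R : pzRingType) (a b c : R) :
  left_bc_invertible a b c <-> exists r, r * c * a * b = b.
Proof.
split.
- move=> [y [H1 H2]]. have [r Hr] := H1 y (ex_intro _ 1 (esym (mul1r y))).
  exists r; by rewrite -Hr.
- move=> [r Hr]; exists (r * c); split => //.
  move=> z [t ->]; exists (t * r); by rewrite mulrA.
Qed.

Lemma rightE (R : pzRingType) (a b c : R) :
  right_bc_invertible a b c <-> exists r, c * a * (b * r) = c.
Proof.
split.
- move=> [y [H1 H2]]. have [r Hr] := H1 y (ex_intro _ 1 (esym (mulr1 y))).
  exists r; by rewrite -Hr.
- move=> [r Hr]; exists (b * r); split => //.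
  move=> z [t ->]; exists (r * t); by rewrite mulrA.
Qed.

Theorem proposition2p19 (R : pzRingType) (star : R -> R) (a : R) :
  involution star ->
  (* (i) *)
  ((right_bc_invertible a (star a) 1 <->
      (forall z : R, in_rprin (a * star a) z)) /\
   (left_bc_invertible a 1 (star a) <->
      (forall z : R, in_lprin (star a * a) z))) /\
  (* (ii) *)
  ((left_bc_invertible a a (star a) <->
      (forall z : R, in_lprin a z <-> in_lprin (star a * a ^+ 2) z)) /\
   (right_bc_invertible a a (star a) <->
      (forall z : R, in_rprin (star a) z <-> in_rprin (star a * a ^+ 2) z))) /\
  (* (iii) *)
  ((left_bc_invertible a (star a) a <->
      (forall z : R, in_lprin (star a) z <-> in_lprin (a ^+ 2 * star a) z)) /\
   (right_bc_invertible a (star a) a <->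
      (forall z : R, in_rprin a z <-> in_rprin (a ^+ 2 * star a) z))).
Proof.
move=> _; set s := star a.
split; [split|split; [split|split]].
- eapply iff_trans; first exact: rightE. split.
  + move=> [r Hr] z; exists (r * z); by rewrite mul1r mulrA in Hr; rewrite !mulrA Hr mul1r.
  + move=> H; have [r Hr] := H 1; exists r; by rewrite mul1r mulrA -Hr.
- eapply iff_trans; first exact: leftE. split.
  + move=> [r Hr] z; exists (z * r); by rewrite mulr1 in Hr; rewrite -!mulrA (mulrA r) Hr mulr1.
  + move=> H; have [r Hr] := H 1; exists r; by rewrite mulr1 -mulrA -Hr.
- eapply iff_trans; first exact: leftE. split.
  + move=> [r Hr] z; split.
    * move=> [t ->]; exists (t * r); by rewrite expr2 !mulrA -[in LHS]Hr !mulrA.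
    * move=> [t ->]; exists (t * s * a); by rewrite expr2 !mulrA.
  + move=> H; have [r Hr] := (H a).1 (ex_intro _ 1 (esym (mul1r a))).
    exists r; by rewrite expr2 !mulrA in Hr; rewrite -Hr.
- eapply iff_trans; first exact: rightE. split.
  + move=> [r Hr] z; split.
    * move=> [t ->]; exists (r * t); by rewrite expr2 !mulrA -[in LHS]Hr !mulrA.
    * move=> [t ->]; exists (a * a * t); by rewrite expr2 !mulrA.
  + move=> H; have [r Hr] := (H s).1 (ex_intro _ 1 (esym (mulr1 s))).
    exists r; by rewrite expr2 !mulrA in Hr; rewrite !mulrA -Hr.
- eapply iff_trans; first exact: leftE. split.
  + move=> [r Hr] z; split.
    * move=> [t ->]; exists (t * r); by rewrite expr2 !mulrA -[in LHS]Hr !mulrA.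
    * move=> [t ->]; exists (t * a * a); by rewrite expr2 !mulrA.
  + move=> H; have [r Hr] := (H s).1 (ex_intro _ 1 (esym (mul1r s))).
    exists r; by rewrite expr2 !mulrA in Hr; rewrite -Hr.
- eapply iff_trans; first exact: rightE. split.
  + move=> [r Hr] z; split.
    * move=> [t ->]; exists (r * t); by rewrite expr2 !mulrA -[in LHS]Hr !mulrA.
    * move=> [t ->]; exists (a * s * t); by rewrite expr2 !mulrA.
  + move=> H; have [r Hr] := (H a).1 (ex_intro _ 1 (esym (mulr1 a))).
    exists r; rewrite expr2 in Hr; by rewrite !mulrA -Hr.
Qed.
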